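(* If $L\subseteq\Sigma^*$ belongs to $Pol(\mathcal{C}om)(\Sigma)$, then $N^1(L)=O(\log n)$.
   Context: Non-deterministic communication complexity: for $f:X\times Y\to\{0,1\}$, $N^1(f)$ is the minimum cost of a non-deterministic protocol for $f$; equivalently, up to an additive constant 2, $N^1(f)=\log_2 C^1(f)$, where $C^1(f)$ is the minimum number of rectangles $S\times T\subseteq X\times Y$ on which $f\equiv1$ whose union is $f^{-1}(1)$. For a language $L\subseteq\Sigma^*$, $N^1(L)(n)$ is $N^1$ of the function in which Alice receives $a_1,a_3,\dots,a_{2n-1}$, Bob receives $a_2,a_4,\dots,a_{2n}$, each $a_i\in\Sigma\cup\{\epsilon\}$ ($\epsilon$ the empty word), and the value is $1$ iff $a_1a_2\cdots a_{2n}\in L$. $\mathcal{C}om(\Sigma)$ denotes the set of regular languages over $\Sigma$ whose syntactic monoid ($\Sigma^*/\equiv_L$, where $x\equiv_L y$ iff $uxv\in L\Leftrightarrow uyv\in L$ for all $u,v$) is commutative. $Pol(\mathcal{C}om)(\Sigma)$ is the set of finite unions of languages of the form $L_0a_1L_1a_2\cdots a_kL_k$ with $k\ge0$, $a_i\in\Sigma$ and $L_i\in\mathcal{C}om(\Sigma)$. Asymptotics are as $n\to\infty$. *)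

(* Defs.v *)
From mathcomp Require Import all_boot.
From Stdlib Require Lists.List.
Set Implicit Arguments. Unset Strict Implicit. Unset Printing Implicit Defensive.

Section Lang.
Variable Sigma : finType.

Definition lang := seq Sigma -> bool.

Definition regular (L : lang) : Prop :=
  exists (Q : finType) (delta : Q -> Sigma -> Q) (q0 : Q) (F : pred Q),
    forall w, L w = F (foldl delta q0 w).

Definition synt_eq (L : lang) (x y : seq Sigma) : Prop :=
  forall u v, L (u ++ x ++ v) = L (u ++ y ++ v).

(* Com(Sigma): regular languages whose syntactic monoid is commutative,
   i.e. [x][y] = [y][x] in Sigma^*/==_L for all x y. *)
Definition Com (L : lang) : Prop :=
  regular L /\ forall x y, synt_eq L (x ++ y) (y ++ x).

Definition lconcat (A B : lang) : lang := fun w =>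
  [exists i : 'I_(size w).+1, A (take i w) && B (drop i w)].
Definition lletter (a : Sigma) : lang := fun w => w == [:: a].

Fixpoint monomial (L0 : lang) (s : seq (Sigma * lang)) : lang :=
  match s with
  | [::] => L0
  | (a, L1) :: s' => lconcat L0 (lconcat (lletter a) (monomial L1 s'))
  end.

Definition monomial_union (ms : seq (lang * seq (Sigma * lang))) : lang :=
  fun w => has (fun m => monomial m.1 m.2 w) ms.

Definition PolCom (L : lang) : Prop :=
  exists ms : seq (lang * seq (Sigma * lang)),
    List.Forall (fun m => Com m.1 /\ List.Forall (fun p => Com p.2) m.2) ms /\
    forall w, L w = monomial_union ms w.

End Lang.

Section Cover.
Variables X Y : finType.
Variable f : X -> Y -> bool.

Definition is_one_cover (C : {set {set X} * {set Y}}) : bool :=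
  [forall R in C, [forall x in R.1, [forall y in R.2, f x y]]] &&
  [forall x, [forall y, f x y ==> [exists R in C, (x \in R.1) && (y \in R.2)]]].

Lemma one_cover_exists : exists k, [exists C, is_one_cover C && (#|C| == k)].
Proof.
set C := [set ([set p.1], [set p.2]) | p in [set p : X * Y | f p.1 p.2]].
exists #|C|; apply/existsP; exists C; rewrite eqxx andbT; apply/andP; split.
  apply/forall_inP => R /imsetP [p]; rewrite inE => fp -> /=.
  apply/forall_inP => x; rewrite inE => /eqP ->.
  by apply/forall_inP => y; rewrite inE => /eqP ->.
apply/forallP => x; apply/forallP => y; apply/implyP => fxy.
apply/exists_inP; exists ([set x], [set y]); last by rewrite /= !set11.
by apply/imsetP; exists (x, y); rewrite ?inE.
Qed.

Definition C1 : nat := ex_minn one_cover_exists.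

(* N^1(f) := ceil(log2 C^1(f)); equals the protocol-based N^1 up to an
   additive constant (which is irrelevant for O(.) statements). *)
Definition N1 : nat := up_log 2 C1.
End Cover.

(* The communication problem of a language L at length n:
   Alice holds a1,a3,...,a_{2n-1}, Bob holds a2,a4,...,a_{2n},
   each a_i in Sigma ∪ {eps} (encoded as option Sigma, None = eps). *)
Definition interleave (Sigma : finType) (n : nat)
    (x y : n.-tuple (option Sigma)) : seq Sigma :=
  pmap id (flatten [seq [:: p.1; p.2] | p <- zip x y]).

Definition lang_fun (Sigma : finType) (L : lang Sigma) (n : nat) :
    n.-tuple (option Sigma) -> n.-tuple (option Sigma) -> bool :=
  fun x y => L (@interleave Sigma n x y).

Definition N1_lang (Sigma : finType) (L : lang Sigma) (n : nat) : nat :=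
  N1 (@lang_fun Sigma L n).

(* Main.v *)
Require Import Defs.
From mathcomp Require Import all_boot zify.
Set Implicit Arguments. Unset Strict Implicit. Unset Printing Implicit Defensive.

Section Covers.
Variables X Y : finType.

Definition rep (f : X -> Y -> bool) (rs : seq ({set X} * {set Y})) :=
  forall x y, f x y = has (fun R : {set X} * {set Y} => (x \in R.1) && (y \in R.2)) rs.

Definition crep f k := exists rs, rep f rs /\ size rs <= k.

Lemma crep_C1 f k : crep f k -> C1 f <= k.
Proof.
case=> rs [hr hs]; rewrite /C1.
case: ex_minnP => m _ hmin; apply: leq_trans (_ : #|[set R in rs]| <= k).
  apply: hmin; apply/existsP; exists [set R in rs]; rewrite eqxx andbT.
  apply/andP; split.
    apply/forall_inP => R; rewrite inE => Rin.
    apply/forall_inP => x xin; apply/forall_inP => y yin.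
    by rewrite hr; apply/hasP; exists R => //; rewrite xin yin.
  apply/forallP => x; apply/forallP => y; apply/implyP; rewrite hr.
  case/hasP => R Rin /andP[xin yin]; apply/exists_inP; exists R.
    by rewrite inE. by rewrite xin yin.
by rewrite cardsE; apply: leq_trans (card_size _) hs.
Qed.

Lemma crep_ext f g k : (forall x y, f x y = g x y) -> crep f k -> crep g k.
Proof. by move=> e [rs [hr hs]]; exists rs; split=> // x y; rewrite -e. Qed.

Lemma crep_mono f k k' : k <= k' -> crep f k -> crep f k'.
Proof. by move=> le [rs [hr hs]]; exists rs; split=> //; apply: leq_trans le. Qed.

Lemma crep_false k : crep (fun _ _ => false) k.
Proof. by exists [::]. Qed.

Lemma crep_or f g k1 k2 : crep f k1 -> crep g k2 ->
  crep (fun x y => f x y || g x y) (k1 + k2).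
Proof.
case=> [r1 [h1 s1]] [r2 [h2 s2]]; exists (r1 ++ r2); split.
  by move=> x y; rewrite has_cat h1 h2.
by rewrite size_cat leq_add.
Qed.

Lemma crep_and f g k1 k2 : crep f k1 -> crep g k2 ->
  crep (fun x y => f x y && g x y) (k1 * k2).
Proof.
case=> [r1 [h1 s1]] [r2 [h2 s2]].
exists [seq (R1.1 :&: R2.1, R1.2 :&: R2.2) | R1 <- r1, R2 <- r2]; split.
  move=> x y; rewrite h1 h2; apply/idP/idP.
    case/andP=> /hasP[R1 i1 /andP[a1 b1]] /hasP[R2 i2 /andP[a2 b2]].
    apply/hasP; exists (R1.1 :&: R2.1, R1.2 :&: R2.2).
      by apply/allpairsP; exists (R1, R2).
    by rewrite /= !inE a1 b1 a2 b2.
  case/hasP => R /allpairsP[[R1 R2] [i1 i2 ->]]; rewrite /= !inE.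
  case/andP=> /andP[a1 a2] /andP[b1 b2]; apply/andP; split; apply/hasP.
    by exists R1 => //; rewrite a1 b1.
  by exists R2 => //; rewrite a2 b2.
by rewrite size_allpairs leq_mul.
Qed.

Lemma crep_has (I : eqType) (s : seq I) (f : I -> X -> Y -> bool) B :
  (forall i, i \in s -> crep (f i) B) ->
  crep (fun x y => has (fun i => f i x y) s) (size s * B).
Proof.
elim: s => [|i s IH] H /=; first by exists [::].
rewrite mulSn; apply: crep_or; first by apply: H; rewrite mem_head.
by apply: IH => j js; apply: H; rewrite inE js orbT.
Qed.

Lemma crep_rectX (P : pred X) : crep (fun x _ => P x) 1.
Proof.
exists [:: ([set x | P x], setT)]; split=> // x y /=.
by rewrite !inE orbF andbT.
Qed.

Lemma crep_rectY (P : pred Y) : crep (fun _ y => P y) 1.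
Proof.
exists [:: (setT, [set y | P y])]; split=> // x y /=.
by rewrite !inE orbF.
Qed.

End Covers.

Section LangLemmas.
Variable Sigma : finType.
Implicit Types (L P Q : lang Sigma) (w : seq Sigma) (t : seq (option Sigma)).

Lemma com_perm L : (forall x y, synt_eq L (x ++ y) (y ++ x)) ->
  forall u v, perm_eq u v -> forall p q, L (p ++ u ++ q) = L (p ++ v ++ q).
Proof.
move=> Hc; elim=> [|a u IH] v.
  by move=> /perm_size; case: v.
move=> puv p q.
have av : a \in v by rewrite -(perm_mem puv) mem_head.
move: av puv; case/splitPr => v1 v2 puv.
have puv' : perm_eq u (v1 ++ v2).
  by rewrite -(perm_cons a); apply: perm_trans puv _; rewrite -cat1s perm_catCA.
have -> : p ++ (a :: u) ++ q = (p ++ [:: a]) ++ u ++ q by rewrite -catA.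
rewrite (IH _ puv') -!catA /=.
have := Hc [:: a] v1 p (v2 ++ q); by rewrite -!catA /=.
Qed.

Lemma com_perm0 L : Com L -> forall u v, perm_eq u v -> L u = L v.
Proof.
case=> _ Hc u v puv; have := com_perm Hc puv [::] [::].
by rewrite /= !cats0.
Qed.

Lemma lconcat_nil P Q : lconcat P Q [::] = P [::] && Q [::].
Proof.
rewrite /lconcat; apply/existsP/idP.
  by case=> [[[|i] hi] h].
by move=> h; exists ord0.
Qed.

Lemma lconcat_cons P Q b w :
  lconcat P Q (b :: w) = (P [::] && Q (b :: w)) || lconcat (fun u => P (b :: u)) Q w.
Proof.
rewrite /lconcat; apply/existsP/orP.
  case=> [[[|i] hi]] /= h; first by left.
  by right; apply/existsP; exists (Ordinal (hi : i < (size w).+1)).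
case=> [h|/existsP[[i hi] h]]; first by exists ord0.
by exists (Ordinal (hi : i.+1 < (size w).+2)).
Qed.

Lemma lconcat_letter a Q w :
  lconcat (lletter a) Q w = if w is b :: w' then (b == a) && Q w' else false.
Proof.
case: w => [|b w]; first by rewrite lconcat_nil.
rewrite lconcat_cons /lletter /=.
case: w => [|c w]; first by rewrite lconcat_nil /= eqseq_cons andbT.
rewrite lconcat_cons /= eqseq_cons andbT.
suff -> : lconcat (fun u => [:: b, c & u] == [:: a]) Q w = false by rewrite orbF.
by rewrite /lconcat; apply/negbTE/existsP => -[i] /andP[/eqP].
Qed.

Fixpoint MonoS L0 (s : seq (Sigma * lang Sigma)) t : bool :=
  match s with
  | [::] => L0 (pmap id t)
  | (a, L1) :: s' => has (fun p => L0 (pmap id (take p t)) &&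
       (nth None t p == Some a) && MonoS L1 s' (drop p.+1 t)) (iota 0 (size t))
  end.

Lemma conc_slot P a Q t :
  lconcat P (lconcat (lletter a) Q) (pmap id t) =
  has (fun p => P (pmap id (take p t)) && (nth None t p == Some a) &&
                Q (pmap id (drop p.+1 t))) (iota 0 (size t)).
Proof.
elim: t P => [|[b|] t IH] P.
- by rewrite /= lconcat_nil lconcat_letter andbF.
- rewrite /= lconcat_cons lconcat_letter IH /= -(addn0 1) iotaDl has_map.
  rewrite drop0 -andbA; congr (_ || _); apply: eq_has => p; rewrite /preim /= add1n.
- rewrite /= IH andbF /= -(addn0 1) iotaDl has_map.
  by apply: eq_has => p; rewrite /preim /= add1n.
Qed.

Lemma mono_slot L0 s t : monomial L0 s (pmap id t) = MonoS L0 s t.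
Proof.
elim: s L0 t => [|[a L1] s IH] L0 t //=.
rewrite conc_slot; apply: eq_has => p; by rewrite IH.
Qed.

Definition slot (x y : seq (option Sigma)) j :=
  if odd j then nth None y j./2 else nth None x j./2.

Lemma interleave_slot (x y : seq (option Sigma)) : size x = size y ->
  flatten [seq [:: p.1; p.2] | p <- zip x y] = map (slot x y) (iota 0 (size x).*2).
Proof.
elim: x y => [|a x IH] [|b y] //= [e].
rewrite IH // -(addn0 2) iotaDl -map_comp.
congr [:: _, _ & _]; apply: eq_map => j /=; by rewrite /slot /= add0n negbK.
Qed.

End LangLemmas.

Section Main.
Variable Sigma : finType.

Lemma leq_expb a b d : a <= b -> a ^ d <= b ^ d.
Proof. by move=> h; elim: d => // d IH; rewrite !expnS leq_mul. Qed.

Lemma seg_crep (L : lang Sigma) : Com L -> exists K, forall n (J : seq nat),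
  crep (fun x y : n.-tuple (option Sigma) => L (pmap id (map (slot x y) J))) K.
Proof.
move=> Hc; have [Q [delta [q0 [F HL]]]] := Hc.1.
exists #|Q| => n J.
pose uB (y : n.-tuple (option Sigma)) :=
  pmap id (map (fun j => nth None y j./2) (filter odd J)).
pose uA (x : n.-tuple (option Sigma)) :=
  pmap id (map (fun j => nth None x j./2) (filter (predC odd) J)).
have e (x y : n.-tuple (option Sigma)) : L (pmap id (map (slot x y) J)) = L (uB y ++ uA x).
  apply: com_perm0 => //.
  have -> : uB y ++ uA x = pmap id (map (slot x y) (filter odd J ++ filter (predC odd) J)).
    rewrite map_cat pmap_cat; congr (_ ++ _); congr pmap; apply/eq_in_map => j;
    rewrite mem_filter /slot => /andP[h _].
      by rewrite h.
    by rewrite (negbTE h).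
  by apply: perm_pmap; apply: perm_map; rewrite perm_sym perm_filterC.
have := @crep_has _ _ _ (enum Q)
  (fun q x y => F (foldl delta q (uA x)) && (foldl delta q0 (uB y) == q)) 1.
rewrite -cardE muln1 => H.
apply: crep_ext (H _) => [x y|q _].
  rewrite e HL foldl_cat; apply/hasP/idP.
    by case=> q _ /andP[h /eqP ->].
  by move=> h; exists (foldl delta q0 (uB y)); rewrite ?mem_enum // h eqxx.
exact: (crep_mono (isT : 1 * 1 <= 1) (crep_and
  (crep_rectX (n.-tuple (option Sigma)) (fun x : n.-tuple (option Sigma) => F (foldl delta q (uA x))))
  (crep_rectY (n.-tuple (option Sigma)) (fun y : n.-tuple (option Sigma) => foldl delta q0 (uB y) == q)))).
Qed.

Lemma slot_crep n j (a : Sigma) :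
  crep (fun x y : n.-tuple (option Sigma) => slot x y j == Some a) 1.
Proof.
rewrite /slot; case: (odd j).
  exact: (crep_rectY (n.-tuple (option Sigma)) (fun y : n.-tuple (option Sigma) => nth None y j./2 == Some a)).
exact: (crep_rectX (n.-tuple (option Sigma)) (fun x : n.-tuple (option Sigma) => nth None x j./2 == Some a)).
Qed.

Lemma mono_crep (L0 : lang Sigma) s : Com L0 -> List.Forall (fun p => Com p.2) s ->
  exists K, forall n J, crep (fun x y : n.-tuple (option Sigma) =>
     MonoS L0 s (map (slot x y) J)) (K * (size J).+1 ^ size s).
Proof.
elim: s L0 => [|[a L1] s IH] L0 HC0 HF.
  have [K HK] := seg_crep HC0; exists K => n J; rewrite expn0 muln1; exact: HK.
have /List.Forall_cons_iff [HC1 HF'] := HF.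
have [K0 H0] := seg_crep HC0; have [K' H'] := IH L1 HC1 HF'.
exists (K0 * K') => n J /=.
set S := (size J).+1.
apply: (@crep_mono _ _ _ (size (iota 0 (size J)) * (K0 * 1 * (K' * S ^ size s)))).
  rewrite size_iota expnSr.
  have : size J <= S by rewrite /S.
  move: (S ^ size s) => T h.
  rewrite muln1 (mulnC T) !mulnA.
  by rewrite leq_mul2r -mulnA mulnC leq_mul2l h !orbT.
have HH := @crep_has _ _ _ (iota 0 (size J)) (fun p (x y : n.-tuple (option Sigma)) =>
  L0 (pmap id (map (slot x y) (take p J))) && (slot x y (nth 0 J p) == Some a) &&
  MonoS L1 s (map (slot x y) (drop p.+1 J))) (K0 * 1 * (K' * S ^ size s)).
apply: crep_ext (HH _) => [x y|p hp].
  rewrite size_map; apply: eq_in_has => p; rewrite mem_iota add0n => /andP[_ hp].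
  by rewrite -map_take -map_drop (nth_map 0).
apply: crep_and; first exact: crep_and (H0 _ _) (slot_crep _ _ _).
apply: crep_mono (H' _ _); rewrite leq_mul2l leq_expb ?orbT //.
by rewrite ltnS size_drop leq_subr.
Qed.

Lemma union_crep (ms : seq (lang Sigma * seq (Sigma * lang Sigma))) :
  List.Forall (fun m => Com m.1 /\ List.Forall (fun p => Com p.2) m.2) ms ->
  exists K d, forall n J, crep (fun x y : n.-tuple (option Sigma) =>
     has (fun m => MonoS m.1 m.2 (map (slot x y) J)) ms) (K * (size J).+1 ^ d).
Proof.
elim: ms => [|m ms IH] HF.
  by exists 0, 0 => n J; apply: crep_ext (crep_false _ _ _).
have /List.Forall_cons_iff [[HC HFm] HF'] := HF.
have [K1 H1] := mono_crep HC HFm; have [K2 [d2 H2]] := IH HF'.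
exists (K1 + K2), (size m.2 + d2) => n J /=.
apply: crep_mono (crep_or (H1 n J) (H2 n J)).
rewrite mulnDl leq_add // leq_mul2l leq_pexp2l ?orbT ?leq_addr ?leq_addl //.
Qed.

End Main.
Unset Implicit Arguments.

Theorem mainTheorem8 (Sigma : finType) (L : lang Sigma) :
  PolCom L ->
  exists (c n0 : nat), forall n, n0 <= n -> N1_lang L n <= c * up_log 2 n.
Proof.
case=> ms [HF HL].
have [K [d H]] := union_crep HF.
exists (K + 3 * d), 2 => n hn.
have HC : C1 (@lang_fun _ L n) <= K * (n.*2).+1 ^ d.
  apply: crep_C1.
  have := H n (iota 0 n.*2); rewrite size_iota; apply: crep_ext => x y.
  rewrite /lang_fun HL /monomial_union /interleave interleave_slot; last by rewrite !size_tuple.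
  by rewrite size_tuple; apply: eq_has => m; rewrite mono_slot.
rewrite /N1_lang /N1; apply: up_log_min => //.
set u := up_log 2 n.
have u1 : 1 <= u by rewrite up_log_gt0.
have nu : n <= 2 ^ u by apply: up_logP.
apply: (leq_trans HC).
have h1 : (n.*2).+1 <= 2 ^ (3 * u).
  apply: (@leq_trans (2 ^ (u + 2))).
    rewrite expnD (_ : 2 ^ 2 = 4) //; move: nu; move: (2 ^ u) => E; lia.
  rewrite leq_exp2l //; lia.
apply: (@leq_trans (2 ^ K * (2 ^ (3 * u)) ^ d)).
  by apply: leq_mul; [apply: ltnW; apply: ltn_expl | apply: leq_expb].
rewrite -expnM -expnD leq_exp2l // mulnDl leq_add //.
  by rewrite leq_pmulr.
by rewrite mulnAC.
Qed.
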